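(* Let $X$ be a finite set and let $c$ be a choice correspondence on $X$ that admits a minimal compromise representation. Then $c$ satisfies axiom $\beta$: for all $x,y\in X$ and menus $A\subset B$, if $x,y\in A$, $x,y\in c(A)$ and $y\in c(B)$, then $x\in c(B)$. However, $c$ need not satisfy axiom $\alpha$: there exists a choice correspondence admitting a minimal compromise representation and menus $B\subset A$ and $x\in B$ with $x\in c(A)$ but $x\notin c(B)$.
   Context: A menu is a nonempty subset of $X$. A choice correspondence is a map $c$ assigning to each menu $A$ a nonempty subset $c(A)\subseteq A$. A weak order is a complete and transitive binary relation on $X$; a linear order is an antisymmetric weak order. For a weak order $R$ and menu $A$, $\max(A,R)=\{x\in A: xRy \text{ for all } y\in A\}$. For a linear order $L$, $\min(A,L)$ denotes the unique $x\in A$ with $yLx$ for all $y\in A$. A choice correspondence $c$ admits a minimal compromise representation if there exist a weak order $R$ and a linear order $L$ on $X$ such that for every menu $A$: $c(A)=\max(A,R)$ if $\max(A,R)$ is a singleton, and $c(A)=\max(A,R)\setminus\{\min(\max(A,R),L)\}$ otherwise. *)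

(* Defs.v *)
From mathcomp Require Import all_boot.
Set Implicit Arguments. Unset Strict Implicit. Unset Printing Implicit Defensive.

Section Defs.
Variable X : finType.

Definition menu (A : {set X}) : Prop := A != set0.

Definition choice_corr (c : {set X} -> {set X}) : Prop :=
  forall A : {set X}, menu A -> c A != set0 /\ c A \subset A.

Definition complete (R : rel X) : Prop := forall x y, R x y || R y x.
Definition transitive_rel (R : rel X) : Prop := forall x y z, R x y -> R y z -> R x z.
Definition weak_order (R : rel X) : Prop := complete R /\ transitive_rel R.
Definition linear_order (L : rel X) : Prop :=
  weak_order L /\ (forall x y, L x y -> L y x -> x = y).

Definition maxR (A : {set X}) (R : rel X) : {set X} :=
  [set x in A | [forall y in A, R x y]].

(* the set of L-minimal elements of A: {x in A | y L x for all y in A};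
   for a linear order L and nonempty A it is the singleton {min(A,L)}. *)
Definition minL (A : {set X}) (L : rel X) : {set X} :=
  [set x in A | [forall y in A, L y x]].

Definition compromise (R L : rel X) (A : {set X}) : {set X} :=
  let M := maxR A R in
  if #|M| == 1 then M else M :\: minL M L.

Definition minimal_compromise_rep (c : {set X} -> {set X}) : Prop :=
  exists R L : rel X, weak_order R /\ linear_order L /\
    forall A : {set X}, menu A -> c A = compromise R L A.

Definition axiom_beta (c : {set X} -> {set X}) : Prop :=
  forall (x y : X) (A B : {set X}), A \subset B ->
    x \in A -> y \in A -> x \in c A -> y \in c A -> y \in c B -> x \in c B.

Definition axiom_alpha (c : {set X} -> {set X}) : Prop :=
  forall (x : X) (A B : {set X}), B \subset A -> x \in B -> x \in c A -> x \in c B.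

End Defs.

(* Main.v *)
Require Import Defs.
From mathcomp Require Import all_boot.

Lemma inC (X : finType) (R L : rel X) (A : {set X}) z :
  z \in compromise R L A -> z \in maxR A R.
Proof. by rewrite /compromise; case: ifP => // _; rewrite inE => /andP[]. Qed.

Lemma beta_part (X : finType) (c : {set X} -> {set X}) :
  choice_corr c -> minimal_compromise_rep c -> axiom_beta c.
Proof.
move=> _ [R [L [[_ Rtr] [[_ Lanti] cE]]]] x y A B AB xA yA xcA ycA ycB.
have mA : menu A by apply/set0Pn; exists x.
have mB : menu B by apply/set0Pn; exists y; exact: (subsetP AB).
case: (eqVneq x y) => [->//|nxy].
move: xcA ycA ycB; rewrite !cE // => xcA ycA ycB.
have xMA := inC _ _ _ _ _ xcA; have yMA := inC _ _ _ _ _ ycA; have yMB := inC _ _ _ _ _ ycB.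
move: xcA ycA ycB; rewrite /compromise.
set MA := maxR A R in xMA yMA *; set MB := maxR B R in yMB *.
have yB : forall w, w \in B -> R y w.
  by move: yMB; rewrite inE => /andP[_ /forallP H] w wB; move: (H w); rewrite wB.
have MAMB : MA \subset MB.
  apply/subsetP => z; rewrite !inE => /andP[zA /forallP H].
  have zy : R z y by move: (H y); rewrite yA.
  apply/andP; split; first exact: (subsetP AB).
  apply/forallP => w; apply/implyP => wB.
  by apply: Rtr zy _; apply: yB.
have xMB := subsetP MAMB x xMA.
case: ifP => [/cards1P [a Ha] | _].
  move: xMA yMA nxy; rewrite Ha !in_set1 => /eqP -> /eqP ->; by rewrite eqxx.
rewrite inE => /andP[xnm _] _ _.
case: ifP => // _.
rewrite inE xMB andbT; apply: contra xnm.
move=> /setIdP[_ /forallP H]; apply/setIdP; split=> //; apply/forallP => w; apply/implyP => wA.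
by move: (H w); rewrite (subsetP MAMB w wA).
Qed.

Definition Rt : rel 'I_3 := fun _ _ => true.
Definition Ll : rel 'I_3 := fun x y => (x <= y)%N.
Definition c3 := compromise Rt Ll.

Lemma maxT (A : {set 'I_3}) : maxR A Rt = A.
Proof. by apply/setP => x; rewrite inE andb_idr // => _; apply/forallP => y; apply/implyP. Qed.

Lemma c3_corr : choice_corr c3.
Proof.
move=> A mA; rewrite /c3 /compromise maxT.
case: ifP => [_|A1]; first by rewrite mA subxx.
split; last exact: subsetDl.
have M1 : (#|minL A Ll| <= 1)%N.
  apply/card_le1_eqP => x y; rewrite !inE => /andP[xA /forallP Hx] /andP[yA /forallP Hy].
  move: (Hx y) (Hy x); rewrite xA yA /= /Ll => h1 h2.
  by apply: val_inj; apply/eqP; rewrite eqn_leq h1 h2.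
rewrite -card_gt0 cardsD.
have h1 : (#|A :&: minL A Ll| <= #|minL A Ll|)%N by apply/subset_leq_card/subsetIr.
have h2 : (0 < #|A|)%N by rewrite card_gt0.
move/negbT: A1 => A1.
have h3 : (1 < #|A|)%N by rewrite ltn_neqAle eq_sym A1 h2.
rewrite subn_gt0; apply: leq_ltn_trans h3; exact: leq_trans h1 M1.
Qed.

Lemma c3_rep : minimal_compromise_rep c3.
Proof.
exists Rt, Ll; split; first by split.
split; last by [].
split; first split.
- by move=> x y; apply: leq_total.
- by move=> x y z; apply: leq_trans.
- by move=> x y H1 H2; apply: val_inj; apply/eqP; rewrite eqn_leq; apply/andP.
Qed.

Lemma c3_ex : exists (A B : {set 'I_3}) (x : 'I_3),
        B \subset A /\ x \in B /\ x \in c3 A /\ x \notin c3 B.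
Proof.
exists setT, [set inord 0; inord 1], (inord 1).
split; first exact: subsetT.
split; first by rewrite !inE eqxx orbT.
rewrite /c3 /compromise !maxT cardsT card_ord /=.
rewrite cards2.
have n01 : (inord 0 : 'I_3) != inord 1 by apply/eqP => /(congr1 (@nat_of_ord 3)); rewrite !inordK.
rewrite n01 /=.
split.
  rewrite !inE andbT; apply/forallP => /(_ (inord 2)); rewrite inE /Ll /= !inordK //.
rewrite !inE negb_and negbK; apply/orP; left.
apply/andP; split; first by rewrite eqxx orbT.
apply/forallP => y; apply/implyP; rewrite !inE => /orP[] /eqP -> ; rewrite /Ll !inordK //.
Qed.

Theorem lemma1 :
  (forall (X : finType) (c : {set X} -> {set X}),
      choice_corr c -> minimal_compromise_rep c -> axiom_beta c) /\
  (exists (X : finType) (c : {set X} -> {set X}),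
      choice_corr c /\ minimal_compromise_rep c /\
      exists (A B : {set X}) (x : X),
        B \subset A /\ x \in B /\ x \in c A /\ x \notin c B).
Proof.
split; first exact: beta_part.
exists ('I_3 : finType), c3; split; first exact: c3_corr.
split; first exact: c3_rep.
exact: c3_ex.
Qed.
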